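(* Let $N,\beta,\mu,\gamma>0$ with $\frac{\beta N}{\mu+\gamma}>1$ and $*:=N-\frac{\mu+\gamma}{\beta}$. For $a,b\in(0,N)$ define $$V(a,b)=\inf_{t>0}\ \inf\Big\{\tfrac12\int_0^t|u(s)|^2ds:\ u\in L^2([0,t]),\ \phi(t)=b,\ \text{where } \phi(s)=a+\int_0^s\phi(\theta)(\beta N-\mu-\gamma-\beta\phi(\theta))d\theta+\int_0^s\phi(\theta)(N-\phi(\theta))u(\theta)d\theta\Big\},$$ and set $\overline{V}_\rho=V( *,\rho)$, $\overline{V}_{-\rho}=V( *,N-\rho)$ for small $\rho>0$. Then $$\lim_{\rho\to0}\overline{V}_\rho=\lim_{\rho\to0}\overline{V}_{-\rho}=\infty.$$
   Context: $V(a,b)$ is the large-deviation quasi-potential (minimal control cost) for moving from $a$ to $b$ for the SDE $dI=I([\beta N-\mu-\gamma-\beta I]dt+\sigma(N-I)dB)$; $*$ is its positive deterministic equilibrium. *)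

(* Defs.v *)
From HB Require Import structures.
From mathcomp Require Import all_boot all_order all_algebra.
From mathcomp Require Import all_classical all_reals all_analysis.
Set Implicit Arguments. Unset Strict Implicit. Unset Printing Implicit Defensive.
Import Order.TTheory GRing.Theory Num.Theory.
Import numFieldNormedType.Exports.
Local Open Scope classical_set_scope.
Local Open Scope ring_scope.

Section SIS.
Variable R : realType.
Notation mu := (@lebesgue_measure R).

Definition L2_control (t : R) (u : R -> R) : Prop :=
  measurable_fun `[0%R, t] u /\
  (\int[mu]_(x in `[0%R, t]) ((u x) ^+ 2)%:E < +oo)%E.

Definition controlled_path (N beta muR gamma a t : R) (u phi : R -> R) : Prop :=
  {within `[0%R, t], continuous phi} /\
  forall s, 0 <= s <= t ->
    phi s = a
      + Rintegral mu `[0%R, s]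
          (fun th => phi th * (beta * N - muR - gamma - beta * phi th))
      + Rintegral mu `[0%R, s]
          (fun th => phi th * (N - phi th) * u th).

Definition control_cost (t : R) (u : R -> R) : \bar R :=
  ((2 : R)^-1)%:E * \int[mu]_(x in `[0%R, t]) ((u x) ^+ 2)%:E.

Definition quasi_potential (N beta muR gamma a b : R) : \bar R :=
  ereal_inf [set c | exists t (u phi : R -> R),
     [/\ 0 < t, L2_control t u, controlled_path N beta muR gamma a t u phi,
         phi t = b & c = control_cost t u]].

End SIS.

(* Main.v *)
Require Import Defs.
From HB Require Import structures.
From mathcomp Require Import all_boot all_order all_algebra.
From mathcomp Require Import all_classical all_reals all_analysis.
From mathcomp Require Import ring lra.
Import Order.TTheory GRing.Theory Num.Theory.
Import numFieldNormedType.Exports.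
Local Open Scope classical_set_scope.
Local Open Scope ring_scope.

Section helpers.
Variable R : realType.

Lemma cont_eps (p : R -> R) (a b x e : R) : {within `[a, b], continuous p} ->
  a <= x -> x <= b -> 0 < e ->
  exists2 d, 0 < d & forall y, a <= y -> y <= b -> `|x - y| < d -> `|p x - p y| < e.
Proof.
move=> cp ax xb e0.
have xA : `[a, b]%classic x by rewrite /= in_itv /= ax xb.
have := (proj1 (subspace_continuousP _ _) cp) x xA.

move=> /cvgrPdist_lt /(_ e e0); rewrite near_withinE. move=> /nbhs_ballP [d /= d0 H].
exists d => // y ay yb xy; apply: (H y).
  by rewrite /ball /=.
by rewrite in_itv /= ay yb.
Qed.

Lemma last_hit (p : R -> R) (a b c : R) : a <= b -> {within `[a, b], continuous p} ->
  c <= p a -> p b < c ->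
  exists r, [/\ a <= r, r <= b, p r = c & forall th, r < th -> th <= b -> p th < c].
Proof.
move=> ab cp ca cb.
pose S := [set th | a <= th /\ th <= b /\ c <= p th].
have Sa : S a by split => //; split.
have hS : has_sup S.
  split; first by exists a.
  by exists b => y [_ []].
pose r := sup S.
have ar : a <= r by apply: sup_upper_bound.
have rb : r <= b by apply: ge_sup; [exists a | move=> y [_ []]].
have after : forall th, r < th -> th <= b -> p th < c.
  move=> th rth thb; rewrite ltNge; apply/negP => cth.
  have : th <= r by apply: sup_upper_bound => //; split; [lra|split].
  lra.
have cr : c <= p r.
  rewrite leNgt; apply/negP => prc.
  have [d d0 Hd] := @cont_eps p a b r (c - p r) cp ar rb ltac:(lra).
  have [th Sth thr] := sup_adherent d0 hS.
  have thr' : th <= r by apply: sup_upper_bound.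
  case: Sth => ath [thb cth].
  have := Hd th ath thb; rewrite ger0_norm; last by rewrite subr_ge0.
  move=> /(_ ltac:(rewrite /r; lra)).
  rewrite ltr_norml => /andP[h1 h2]; lra.
have cp' : {within `[r, b], continuous p}.
  apply: continuous_subspaceW cp => y /=; rewrite !in_itv /= => /andP[h1 h2].
  apply/andP; split; lra.
have [th] : exists2 th, th \in `[r, b] & p th = c.
  apply: IVT => //.
  rewrite ge_min le_max; apply/andP; split; [apply/orP; right | apply/orP; left]; lra.
rewrite in_itv /= => /andP[rth thb] pth.
exists r; split => //.
have := after th; rewrite pth.
case: (ltrP r th) => [rth' /(_ isT thb)|thr]; first by rewrite ltxx.
have -> : r = th by apply/eqP; rewrite eq_le thr rth.
by [].
Qed.

Lemma first_hit (p : R -> R) (a b c : R) : a <= b -> {within `[a, b], continuous p} ->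
  c < p a -> p b <= c ->
  exists s, [/\ a <= s, s <= b, p s = c & forall th, a <= th -> th < s -> c < p th].
Proof.
move=> ab cp ca cb.
pose S := [set th | a <= th /\ th <= b /\ p th <= c].
have Sb : S b by split => //; split.
have hS : has_inf S.
  split; first by exists b.
  by exists a => y [].
pose s := inf S.
have sb : s <= b by apply: ge_inf => //; exists a => y [].
have as_ : a <= s by apply: lb_le_inf; [exists b | move=> y []].
have before : forall th, a <= th -> th < s -> c < p th.
  move=> th ath ths; rewrite ltNge; apply/negP => cth.
  have : s <= th by apply: ge_inf => //; [exists a => y [] | split; [|split]; lra].
  lra.
have cs : p s <= c.
  rewrite leNgt; apply/negP => prc.
  have [d d0 Hd] := @cont_eps p a b s (p s - c) cp as_ sb ltac:(lra).
  have [th Sth ths] := inf_adherent d0 hS.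
  have ths' : s <= th by apply: ge_inf => //; exists a => y [].
  case: Sth => ath [thb cth].
  have := Hd th ath thb; rewrite ler0_norm; last by rewrite subr_le0.
  move=> /(_ ltac:(rewrite /s; lra)).
  rewrite ltr_norml => /andP[h1 h2]; lra.
have cp' : {within `[a, s], continuous p}.
  apply: continuous_subspaceW cp => y /=; rewrite !in_itv /= => /andP[h1 h2].
  apply/andP; split; lra.
have [th] : exists2 th, th \in `[a, s] & p th = c.
  apply: IVT => //.
  rewrite ge_min le_max; apply/andP; split; [apply/orP; right | apply/orP; left]; lra.
rewrite in_itv /= => /andP[ath ths] pth.
exists s; split => //.
have := before th ath; rewrite pth.
case: (ltrP th s) => [ths' /(_ isT)|sth]; first by rewrite ltxx.
have -> : s = th by apply/eqP; rewrite eq_le sth ths.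
by [].
Qed.


Notation mu := (@lebesgue_measure R).

Lemma itv_sub (a b c d : R) : c <= a -> b <= d -> `[a, b] `<=` `[c, d].
Proof. move=> ca bd y /=; rewrite !in_itv /= => /andP[h1 h2]; apply/andP; split; lra. Qed.

Lemma itv_sub_oc (a b c d : R) : c <= a -> b <= d -> `]a, b] `<=` `[c, d].
Proof. move=> ca bd y /=; rewrite !in_itv /= => /andP[h1 h2]; apply/andP; split; lra. Qed.

Lemma crossing (t x0 m0 : R) (p H u2 : R -> R) :
  0 < x0 -> 0 < m0 ->
  {within `[0, t], continuous p} ->
  x0 < p 0 ->
  (forall r s, 0 <= r -> r <= s -> s <= t ->
     p s - p r = Rintegral mu `]r, s] H) ->
  mu.-integrable `[0, t] (EFin \o H) ->
  mu.-integrable `[0, t] (EFin \o u2) ->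
  (forall th, 0 <= u2 th) ->
  (forall x th, 0 < x -> x <= x0 -> 0 <= th -> th <= t -> 0 <= p th -> p th <= x ->
       - (2 * m0 / x) * H th <= u2 th) ->
  forall n s, 0 <= s -> s <= t -> p s <= x0 / 2 ^+ n ->
    n%:R * m0 <= Rintegral mu `[0, s] u2.
Proof.
move=> x0pos m0pos cp p0 incr iH iu u2ge key.
elim => [|n IH] s s0 st ps.
  by rewrite mul0r; apply: Rintegral_ge0.
set x := x0 / 2 ^+ n.
have xpos : 0 < x by rewrite /x divr_gt0 // exprn_gt0.
have xx0 : x <= x0.
  rewrite /x ler_pdivrMr ?exprn_gt0 //.
  have : 1 <= 2 ^+ n :> R by apply: exprn_ege1; lra.
  nra.
have psx : p s <= x / 2.
  move: ps; rewrite exprS /x. have h2n : 0 < 2 ^+ n :> R by apply: exprn_gt0. have -> : x0 / (2 * 2 ^+ n) = x0 / 2 ^+ n / 2 by field; lra. by [].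
have cps : {within `[0, s], continuous p}.
  by apply: continuous_subspaceW cp; apply: itv_sub => //; lra.
have [s' [s'0 s's ps' bef]] := @first_hit p 0 s (x / 2) s0 cps ltac:(lra) psx.
have cps' : {within `[0, s'], continuous p}.
  by apply: continuous_subspaceW cps; apply: itv_sub => //; lra.
have [r' [r'0 r's' pr' aft]] := @last_hit p 0 s' x s'0 cps' ltac:(lra) ltac:(lra).
have IHr := IH r' r'0 ltac:(lra) ltac:(by rewrite pr').
have iHI : mu.-integrable `]r', s'] (EFin \o H).
  by apply: integrableS iH => //; apply: itv_sub_oc; lra.
have iuI : mu.-integrable `]r', s'] (EFin \o u2).
  by apply: integrableS iu => //; apply: itv_sub_oc; lra.
have mid : m0 <= Rintegral mu `]r', s'] u2.
  have -> : m0 = - (2 * m0 / x) * Rintegral mu `]r', s'] H.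
    rewrite -incr; [|lra|lra|lra]; rewrite ps' pr'; field; lra.
  rewrite -RintegralZl //.
  apply: le_Rintegral => //.
    by apply: (integrableZl _ _ iHI).
  move=> th /=; rewrite in_itv /= => /andP[h1 h2].
  apply: key => //; try lra.
    case: (ltrP th s') => [hs|hs]; first by have := bef th ltac:(lra) hs; lra.
    have -> : th = s' by apply/eqP; rewrite eq_le hs h2.
    lra.
  have := aft th h1 h2; lra.
have ius : mu.-integrable `[0, s] (EFin \o u2).
  by apply: integrableS iu => //; apply: itv_sub; lra.
have ius' : mu.-integrable `[0, s'] (EFin \o u2).
  by apply: integrableS iu => //; apply: itv_sub; lra.
have e1 := @Rintegral_itvB R u2 (BLeft 0) (BRight s) s' ius
  ltac:(by rewrite bnd_simp) ltac:(by rewrite bnd_simp).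
have e2 := @Rintegral_itvB R u2 (BLeft 0) (BRight s') r' ius'
  ltac:(by rewrite bnd_simp) ltac:(by rewrite bnd_simp).
have pos : 0 <= Rintegral mu `]s', s] u2 by apply: Rintegral_ge0.
rewrite -natr1 mulrDl mul1r.
move: e1 e2 pos mid IHr. rewrite /=. lra.
Qed.


Definition f1 (N beta muR gamma : R) (phi : R -> R) x :=
  phi x * (beta * N - muR - gamma - beta * phi x).
Definition f2 (N : R) (phi u : R -> R) x := phi x * (N - phi x) * u x.
Definition hh N beta muR gamma phi u x := f1 N beta muR gamma phi x + f2 N phi u x.

Lemma cont_int (t : R) (f : R -> R) : {within `[0, t], continuous f} ->
  mu.-integrable `[0, t] (EFin \o f).
Proof. by move=> cf; apply: continuous_compact_integrable => //; exact: segment_compact. Qed.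

Lemma path_facts (N beta muR gamma a t : R) (u phi : R -> R) :
  0 < t -> L2_control t u -> controlled_path N beta muR gamma a t u phi ->
  [/\ mu.-integrable `[0, t] (EFin \o (fun x => u x ^+ 2)),
      mu.-integrable `[0, t] (EFin \o hh N beta muR gamma phi u),
      phi 0 = a,
      (forall r s, 0 <= r -> r <= s -> s <= t ->
        phi s - phi r = Rintegral mu `]r, s] (hh N beta muR gamma phi u)) &
      control_cost t u = ((2 : R)^-1 * Rintegral mu `[0, t] (fun x => u x ^+ 2))%:E].
Proof.
move=> t0 [mu_ fin] [cp eq].
have iu2 : mu.-integrable `[0, t] (EFin \o (fun x => u x ^+ 2)).
  apply/integrableP; split.
    by apply/measurable_realfun.measurable_EFinP; apply: measurable_realfun.measurable_funX.
  apply: le_lt_trans fin; rewrite le_eqVlt; apply/orP; left; apply/eqP; apply: eq_integral => x _. by congr EFin; apply: ger0_norm; exact: sqr_ge0.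
have cg : {within `[0, t], continuous (fun x => phi x * (N - phi x))}.
  move=> x; apply: cvgM; first exact: cp.
  by apply: cvgB; [exact: cvg_cst | exact: cp].
have if1 : mu.-integrable `[0, t] (EFin \o f1 N beta muR gamma phi).
  apply: cont_int => x; apply: cvgM; first exact: cp.
  apply: cvgB; first exact: cvg_cst.
  by apply: cvgMr; exact: cp.
have if2 : mu.-integrable `[0, t] (EFin \o f2 N phi u).
  apply: (@le_integrable _ _ _ mu _ _ _ (EFin \o (fun x => (phi x * (N - phi x)) ^+ 2 + u x ^+ 2))).
  - by [].
  - apply/measurable_realfun.measurable_EFinP; apply: measurable_realfun.measurable_funM => //.
    exact: measurable_realfun.subspace_continuous_measurable_fun.
  - move=> x _; rewrite /= lee_fin /f2 normrM.
    rewrite [X in _ <= X]ger0_norm; last by rewrite addr_ge0 // sqr_ge0.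
    have := sqr_ge0 (`|phi x * (N - phi x)| - `|u x|).
    rewrite -(real_normK (num_real (phi x * (N - phi x)))) -(real_normK (num_real (u x))).
    set A := `|_|; set B := `|_|.
    have A0 : 0 <= A by apply: normr_ge0.
    have B0 : 0 <= B by apply: normr_ge0.
    nra.
  - have ig2 : mu.-integrable `[0, t] (EFin \o (fun x => (phi x * (N - phi x)) ^+ 2)).
      by apply: cont_int => x; apply: cvgM; exact: cg.
    by apply: eq_integrable (integrableD _ ig2 iu2) => //.
have ih : mu.-integrable `[0, t] (EFin \o hh N beta muR gamma phi u).
  by apply: eq_integrable (integrableD _ if1 if2) => //.
split => //.
- have := eq 0 ltac:(lra); rewrite set_itv1 !Rintegral_set1; lra.
- move=> r s r0 rs st.
  have sub : `[0, s] `<=` `[0, t] by apply: itv_sub; lra.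
  have subI : `]r, s] `<=` `[0, t] by apply: itv_sub_oc; lra.
  have if1s : mu.-integrable `[0, s] (EFin \o f1 N beta muR gamma phi).
    exact: integrableS if1.
  have if2s : mu.-integrable `[0, s] (EFin \o f2 N phi u).
    exact: integrableS if2.
  have e1 := @Rintegral_itvB R (f1 N beta muR gamma phi) (BLeft 0) (BRight s) r if1s
    ltac:(by rewrite bnd_simp) ltac:(by rewrite bnd_simp).
  have e2 := @Rintegral_itvB R (f2 N phi u) (BLeft 0) (BRight s) r if2s
    ltac:(by rewrite bnd_simp) ltac:(by rewrite bnd_simp).
  rewrite /hh RintegralD //; [|exact: integrableS if1|exact: integrableS if2].
  rewrite eq; last lra.
  rewrite eq; last lra.
  move: e1 e2; rewrite /f1 /f2 /=; lra.
- rewrite /control_cost /Rintegral EFinM fineK //.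
  exact: (integrable_fin_num _ iu2).
Qed.


End helpers.
Section helpers2.
Variable R : realType.
Notation mu := (@lebesgue_measure R).
Lemma key1 (N beta muR gamma P U x : R) : 0 < N -> 0 < beta -> 0 <= muR + gamma ->
  let istar := N - (muR + gamma) / beta in
  0 < istar -> 0 < x -> x <= istar / 2 -> 0 <= P -> P <= x ->
  - (2 * (beta * istar / N ^+ 2) / x) *
    (P * (beta * N - muR - gamma - beta * P) + P * (N - P) * U) <= U ^+ 2.
Proof.
move=> N0 b0 c0 istar i0 x0 xi P0 Px.
have cb : 0 <= (muR + gamma) / beta by apply: divr_ge0; lra.
have PN : P <= N by rewrite /istar in xi; lra.
set m0 := beta * istar / N ^+ 2.
set L := m0 / x.
have m0N : m0 * N ^+ 2 = beta * istar by rewrite /m0; field; lra.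
have Lx : L * x = m0 by rewrite /L; field; lra.
have L0 : 0 <= L by rewrite /L /m0 divr_ge0 // ?divr_ge0 ?mulr_ge0 ?sqr_ge0; lra.
have hf : beta * N - muR - gamma - beta * P = beta * (istar - P).
  by rewrite /istar; field; lra.
have -> : 2 * m0 / x = 2 * L by rewrite /L; field; lra.
rewrite hf.
have h1 : L * P <= m0 by rewrite -Lx; apply: ler_wpM2l.
have h2 : (N - P) ^+ 2 <= N ^+ 2 by rewrite !expr2; nra.
have h3 : L * (P * (N - P)) ^+ 2 <= beta * istar * P.
  have -> : L * (P * (N - P)) ^+ 2 = (L * P) * (P * (N - P) ^+ 2)
    by rewrite !expr2; ring.
  rewrite -m0N.
  have -> : m0 * N ^+ 2 * P = m0 * (P * N ^+ 2) by ring.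
  apply: ler_pM => //.
  - by apply: mulr_ge0.
  - by apply: mulr_ge0 => //; apply: sqr_ge0.
  - by apply: ler_wpM2l.
have h4 : beta * istar * P <= 2 * (P * (beta * (istar - P))).
  have : 0 <= beta * P * (istar - 2 * P).
    by apply: mulr_ge0; [apply: mulr_ge0; lra | lra].
  have -> : 2 * (P * (beta * (istar - P))) = beta * istar * P + beta * P * (istar - 2 * P) by ring.
  lra.
have sq := sqr_ge0 (U + L * (P * (N - P))).
have e : U ^+ 2 + 2 * L * (P * (beta * (istar - P)) + P * (N - P) * U) =
  (U + L * (P * (N - P))) ^+ 2 +
   L * (2 * (P * (beta * (istar - P))) - L * (P * (N - P)) ^+ 2).
  by rewrite !expr2; ring.
have h5 : 0 <= L * (2 * (P * (beta * (istar - P))) - L * (P * (N - P)) ^+ 2).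
  by apply: mulr_ge0 => //; lra.
lra.
Qed.

Lemma key2 (N beta muR gamma P U x : R) : 0 < N -> 0 < beta ->
  let ystar := (muR + gamma) / beta in
  0 < ystar -> ystar < N -> 0 < x -> x <= ystar / 2 -> 0 <= N - P -> N - P <= x ->
  - (2 * (beta / N) / x) *
    (-1 * (P * (beta * N - muR - gamma - beta * P) + P * (N - P) * U)) <= U ^+ 2.
Proof.
move=> N0 b0 ystar y0 yN x0 xi Y0 Yx.
set m0 := beta / N.
set L := m0 / x.
set Y := N - P.
have PY : P = N - Y by rewrite /Y; ring.
have m0N : m0 * N = beta by rewrite /m0; field; lra.
have Lx : L * x = m0 by rewrite /L; field; lra.
have L0 : 0 <= L by rewrite /L /m0 !divr_ge0 //; lra.
have hf : beta * N - muR - gamma - beta * P = beta * (Y - ystar).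
  by rewrite /Y /ystar; field; lra.
have -> : 2 * m0 / x = 2 * L by rewrite /L; field; lra.
rewrite hf.
have P0 : 0 <= P by lra.
have PN : P <= N by lra.
have h1 : L * Y <= m0 by rewrite -Lx; apply: ler_wpM2l.
have h3 : L * (P * Y) ^+ 2 <= beta * ystar * P.
  have -> : L * (P * Y) ^+ 2 = (L * Y) * (P * (P * Y)) by rewrite !expr2; ring.
  have h6 : (L * Y) * (P * (P * Y)) <= m0 * (P * (N * Y)).
    apply: ler_pM => //.
    - by apply: mulr_ge0.
    - by apply: mulr_ge0 => //; apply: mulr_ge0.
    - apply: ler_wpM2l => //; apply: ler_wpM2r => //.
  have e6 : m0 * (P * (N * Y)) = beta * P * Y by rewrite -m0N; ring.
  have : beta * P * Y <= beta * P * ystar.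
    by apply: ler_wpM2l; [apply: mulr_ge0; lra | lra].
  lra.
have h4 : beta * ystar * P <= - 2 * (P * (beta * (Y - ystar))).
  have : 0 <= beta * P * (ystar - 2 * Y).
    by apply: mulr_ge0; [apply: mulr_ge0; lra | lra].
  have -> : - 2 * (P * (beta * (Y - ystar))) = beta * ystar * P + beta * P * (ystar - 2 * Y) by ring.
  lra.
have e : U ^+ 2 - 2 * L * (P * (beta * (Y - ystar)) + P * Y * U) =
  (U - L * (P * Y)) ^+ 2 +
   L * (- 2 * (P * (beta * (Y - ystar))) - L * (P * Y) ^+ 2).
  by rewrite !expr2; ring.
have sq := sqr_ge0 (U - L * (P * Y)).
have h5 : 0 <= L * (- 2 * (P * (beta * (Y - ystar))) - L * (P * Y) ^+ 2).
  by apply: mulr_ge0 => //; lra.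
rewrite -/Y.
lra.
Qed.

End helpers2.

Theorem proposition1 (R : realType) (N beta muR gamma : R) :
  0 < N -> 0 < beta -> 0 < muR -> 0 < gamma ->
  1 < beta * N / (muR + gamma) ->
  let istar := N - (muR + gamma) / beta in
  (quasi_potential N beta muR gamma istar rho @[rho --> 0^'+] --> +oo%E) /\
  (quasi_potential N beta muR gamma istar (N - rho) @[rho --> 0^'+] --> +oo%E).
Proof.
move=> N0 b0 mu0 g0 hR istar.
have c0 : 0 < muR + gamma by lra.
have cbN : muR + gamma < beta * N by move: hR; rewrite ltr_pdivlMr // mul1r.
have ys0 : 0 < (muR + gamma) / beta by apply: divr_gt0.
have ysN : (muR + gamma) / beta < N by rewrite ltr_pdivrMr // mulrC.
have i0 : 0 < istar by rewrite /istar; lra.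
have conv : forall (x0 m0 : R) (V : R -> \bar R), 0 < x0 -> 0 < m0 ->
  (forall (n : nat) (rho : R), rho <= x0 / 2 ^+ n -> (((2 : R)^-1 * (n%:R * m0))%:E <= V rho)%E) ->
  V rho @[rho --> 0^'+] --> +oo%E.
  move=> x0 m0 V x0p m0p H; apply/cvgeyPge => M.
  pose n := Num.Def.archi_bound `|2 * M / m0|.
  have hn : `|2 * M / m0| < n%:R by apply: archi_boundP.
  have hn2 : 2 * M < n%:R * m0.
    rewrite -ltr_pdivrMr //; apply: le_lt_trans hn; exact: ler_norm.
  have xn : 0 < x0 / 2 ^+ n by rewrite divr_gt0 // exprn_gt0.
  near=> rho.
  apply: le_trans (H n rho _); first by rewrite lee_fin; lra.
  apply/ltW; near: rho; exact: nbhs_right_lt.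
split.
- apply: (conv (istar / 2) (beta * istar / N ^+ 2)).
  + lra.
  + by apply: divr_gt0; [apply: mulr_gt0 | apply: exprn_gt0].
  move=> n rho hrho; apply: le_ereal_inf_tmp => _ [t [u [phi [t0 L2 cpth phit ->]]]].
  have [iu ih p0 incr ->] := @path_facts R _ _ _ _ _ _ _ _ t0 L2 cpth.
  rewrite lee_fin; apply: ler_wpM2l; first lra.
  apply: (@crossing R t (istar / 2) (beta * istar / N ^+ 2) phi
     (hh R N beta muR gamma phi u) (fun x => u x ^+ 2)) => //.
  + lra.
  + by apply: divr_gt0; [apply: mulr_gt0 | apply: exprn_gt0].
  + by case: cpth.
  + lra.
  + by move=> th; apply: sqr_ge0.
  + move=> x th xp xx0 _ _ P0 Px; rewrite /hh /f1 /f2.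
    by apply: key1 => //; lra.
  + lra.
  + by rewrite phit.
- apply: (conv ((muR + gamma) / beta / 2) (beta / N)).
  + lra.
  + by rewrite divr_gt0.
  move=> n rho hrho; apply: le_ereal_inf_tmp => _ [t [u [phi [t0 L2 cpth phit ->]]]].
  have [iu ih p0 incr ->] := @path_facts R _ _ _ _ _ _ _ _ t0 L2 cpth.
  rewrite lee_fin; apply: ler_wpM2l; first lra.
  apply: (@crossing R t ((muR + gamma) / beta / 2) (beta / N) (fun x => N - phi x)
     (fun x => -1 * hh R N beta muR gamma phi u x) (fun x => u x ^+ 2)) => //.
  + lra.
  + by rewrite divr_gt0.
  + case: cpth => cp _ x; apply: cvgB; [exact: cvg_cst | exact: cp].
  + rewrite p0 /istar; lra.
  + move=> r s r0 rs st; rewrite RintegralZl //; last first.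
      by apply: integrableS ih => //; apply: itv_sub_oc; lra.
    rewrite -incr //; lra.
  + by apply: (integrableZl _ _ ih).
  + by move=> th; apply: sqr_ge0.
  + move=> x th xp xx0 _ _ P0 Px; rewrite /hh /f1 /f2.
    exact: key2.
  + lra.
  + by rewrite phit; lra.
Unshelve. all: by end_near.
Qed.
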